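(* For any simple directed graph $\mathbb G$ with $n\ge 2$ vertices and $m$ arcs, $a(\mathbb G)\le \frac{m}{n-1}$.
   Context: A simple directed graph has no self-arcs and no repeated arcs. The (in-degree) Laplacian of $\mathbb G$ on $\{1,\dots,n\}$ is $L=D-A$, $D$ the diagonal matrix of in-degrees, $A_{ij}=1$ if $(j,i)$ is an arc and $0$ otherwise. $a(\mathbb G)$ is the second smallest real part among the $n$ eigenvalues of $L$ counted with algebraic multiplicity. *)

(* Defs.v *)
From HB Require Import structures.
From mathcomp Require Import all_boot all_order all_algebra all_field.
Set Implicit Arguments. Unset Strict Implicit. Unset Printing Implicit Defensive.
Import Order.TTheory GRing.Theory Num.Theory.
Local Open Scope ring_scope.

(* A simple directed graph on vertex set 'I_n is an irreflexive relation
   E : rel 'I_n;  E j i  means that (j,i) is an arc.  A relation cannot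
   repeat arcs, and irreflexivity forbids self-arcs. *)
Definition simple_digraph (n : nat) (E : rel 'I_n) : Prop :=
  forall i, E i i = false.

Definition num_arcs (n : nat) (E : rel 'I_n) : nat :=
  #|[set p : 'I_n * 'I_n | E p.1 p.2]|.

Definition indeg (n : nat) (E : rel 'I_n) (i : 'I_n) : nat :=
  #|[set j : 'I_n | E j i]|.

Definition adjmx (n : nat) (E : rel 'I_n) : 'M[algC]_n :=
  \matrix_(i, j) (E j i)%:R.

Definition laplacian (n : nat) (E : rel 'I_n) : 'M[algC]_n :=
  diag_mx (\row_i (indeg E i)%:R) - adjmx E.

Definition eigenvalues_mult (n : nat) (M : 'M[algC]_n) (s : seq algC) : Prop :=
  char_poly M = \prod_(z <- s) ('X - z%:P).

Definition second_smallest_Re (s : seq algC) : algC :=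
  nth 0 (sort <=%R [seq 'Re z | z <- s]) 1.

(* Main.v *)
Require Import Defs.
From HB Require Import structures.
From mathcomp Require Import all_boot all_order all_algebra all_field.
Import Order.TTheory GRing.Theory Num.Theory.
Local Open Scope ring_scope.

Lemma char_poly_tr (n : nat) (A : 'M[algC]_n) : char_poly A^T = char_poly A.
Proof.
rewrite /char_poly -det_tr; congr (\det _).
apply/matrixP=> i j; rewrite !mxE eq_sym; done.
Qed.

Lemma ReN (k : nat) : 'Re (k%:R : algC) = k%:R.
Proof. by apply/Creal_ReP; rewrite realn. Qed.

Lemma sum_indeg n (E : rel 'I_n) i :
  \sum_j ((E j i)%:R : algC) = (indeg E i)%:R.
Proof.
rewrite /indeg cardsE -sumr_const [RHS]big_mkcond /=.
by apply: eq_bigr => j _; rewrite -topredE /=; case: (E j i).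
Qed.

Lemma Lentry n (E : rel 'I_n) (hE : simple_digraph E) i j :
  laplacian E i j = (indeg E i)%:R *+ (i == j) - (E j i)%:R.
Proof.
rewrite /laplacian /adjmx !mxE; done.
Qed.

Lemma exists_max (T : eqType) (f : T -> algC) (s : seq T) x0 :
  x0 \in s -> (forall x, f x \is Num.real) ->
  exists2 x, x \in s & forall y, y \in s -> f y <= f x.
Proof.
elim: s x0 => // a s IH x0 _ hr.
case: s IH => [|b s] IH.
  by exists a; rewrite ?mem_head // => y; rewrite inE => /eqP ->.
have [x xs hx] := IH b (mem_head _ _) hr.
have /orP [h|h] := real_leVge (hr x) (hr a).
  exists a; first exact: mem_head.
  move=> y; rewrite inE => /orP [/eqP ->//|/hx hy]; exact: le_trans hy h.
exists x; first by rewrite inE xs orbT.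
move=> y; rewrite inE => /orP [/eqP ->//|]; exact: hx.
Qed.

Lemma Re_eig_ge0 n (E : rel 'I_n) (hE : simple_digraph E) z :
  root (char_poly (laplacian E)) z -> 0 <= 'Re z.
Proof.
rewrite -char_poly_tr -eigenvalue_root_char => /eigenvalueP [v hv vn0].
have n0 : (0 < n)%N.
  case: n E hE v hv vn0 => // E _ v _; rewrite (_ : v = 0) ?eqxx //.
  by apply/matrixP => i [].
have [i _ hi] := exists_max _ (fun j => `|v 0 j|) (enum 'I_n) (Ordinal n0)
   (mem_enum _ _) (fun _ => normr_real _).
have hi' : forall j, `|v 0 j| <= `|v 0 i| by move=> j; apply: hi; rewrite mem_enum.
have vi0 : 0 < `|v 0 i|.
  rewrite lt_def normr_ge0 andbT; apply: contra vn0 => /eqP h.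
  apply/eqP/matrixP => a j; rewrite ord1 mxE; apply/eqP; rewrite -normr_eq0.
  by rewrite eq_le normr_ge0 andbT -h hi'.
have := congr1 (fun M : 'M[algC]_(1,n) => M 0 i) hv; rewrite !mxE /=.
under eq_bigr => j _ do rewrite mxE Lentry // mulrBr.
rewrite sumrB.
have -> : \sum_j v 0 j * ((indeg E i)%:R *+ (i == j)) = v 0 i * (indeg E i)%:R.
  rewrite (bigD1 i) //= eqxx mulr1n big1 ?addr0 // => j /negbTE hj.
  by rewrite eq_sym hj mulr0n mulr0.
set S := \sum_j _ => hS.
have hS' : (z - (indeg E i)%:R) * v 0 i = - S.
  by rewrite mulrBl -hS [_ * v 0 i]mulrC addrAC subrr add0r.
have hSle : `|S| <= `|v 0 i| * (indeg E i)%:R.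
  apply: le_trans (ler_norm_sum _ _ _) _.
  rewrite -sum_indeg mulr_sumr; apply: ler_sum => j _.
  rewrite normrM normr_nat; case: (E j i); rewrite ?mulr1 ?mulr0 //.
have hz : `|z - (indeg E i)%:R| <= (indeg E i)%:R.
  rewrite -(ler_pM2r vi0) -normrM hS' normrN mulrC; exact: hSle.
have := (leif_Re_Creal (- (z - (indeg E i)%:R))).1.
rewrite normrN raddfN /= raddfB /= ReN => h.
have := le_trans h hz; rewrite opprB lerBlDr -lerBlDl subrr; done.
Qed.
Lemma trace_L n (E : rel 'I_n) (hE : simple_digraph E) :
  \tr (laplacian E) = (num_arcs E)%:R.
Proof.
rewrite /mxtrace.
under eq_bigr => i _ do rewrite Lentry // eqxx mulr1n hE subr0 -sum_indeg.
rewrite exchange_big pair_big /= /num_arcs cardsE -sumr_const [RHS]big_mkcond /=.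
by apply: eq_bigr => p _; rewrite -topredE /=; case: (E p.1 p.2).
Qed.

Lemma sum_ge (b : algC) (r : seq algC) :
  all (fun x => b <= x) r -> b *+ size r <= \sum_(x <- r) x.
Proof.
elim: r => [|x r IH] /=; first by rewrite big_nil.
by move=> /andP [hx hr]; rewrite big_cons mulrS lerD // IH.
Qed.

Lemma sorted_bound (t : seq algC) (k : nat) :
  sorted <=%R t -> all (fun x => 0 <= x) t -> (size t = k.+2)%N ->
  nth 0 t 1 *+ k.+1 <= \sum_(x <- t) x.
Proof.
case: t => [|a [|b r]] //= /andP [_ hs] /and3P [ha hb _] [hk].
have hr : all (fun x => b <= x) r by exact: (order_path_min le_trans hs).
rewrite !big_cons mulrS -hk.
by rewrite -[X in X <= _]add0r lerD // lerD2l sum_ge.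
Qed.

Theorem lemma2 (n : nat) (E : rel 'I_n) (s : seq algC) :
  (2 <= n)%N -> simple_digraph E ->
  eigenvalues_mult (laplacian E) s ->
  second_smallest_Re s <= (num_arcs E)%:R / (n.-1)%:R.
Proof.
move=> hn hE hs.
have nat2 : forall k, (2 <= k)%N -> k = k.-2.+2 by case=> [|[|k]].
have hsz : size s = n.
  by apply: succn_inj; rewrite -(size_char_poly (laplacian E)) hs size_prod_XsubC.
have hsum : \sum_(z <- s) z = (num_arcs E)%:R.
  have := char_poly_trace (laplacian E) (ltn_trans (ltnSn 0) hn).
  rewrite hs trace_L // => h.
  have := coefPn_prod_XsubC (R := algC) (ps := s).
  rewrite hsz h -lt0n (ltn_trans (ltnSn 0) hn) => /(_ isT).
  by move/oppr_inj.
have hre : forall z, z \in s -> 0 <= 'Re z.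
  move=> z zs; apply: (@Re_eig_ge0 _ _ hE); rewrite hs root_prod_XsubC //.
set r := [seq 'Re z | z <- s].
set t := sort <=%R r.
have ht : perm_eq t r by rewrite perm_sort perm_refl.
have hsumt : \sum_(x <- t) x = (num_arcs E)%:R.
  by rewrite (perm_big _ ht) big_map -raddf_sum /= hsum ReN.
have hsort : sorted <=%R t.
  apply: (sort_sorted_in (P := Num.real)); last first.
    by apply/allP => x /mapP [z _ ->]; exact: Creal_Re.
  by move=> x y hx hy; exact: real_leVge.
have hall : all (fun x => 0 <= x) t.
  by rewrite (perm_all _ ht); apply/allP => x /mapP [z zs ->]; exact: hre.
have hszt : size t = (n.-2).+2.
  by rewrite (perm_size ht) size_map hsz -nat2.
have := @sorted_bound _ _ hsort hall hszt.
rewrite /second_smallest_Re -/r -/t hsumt.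
have -> : (n.-2).+1 = n.-1 by rewrite {2}(nat2 _ hn).
have hn1 : (0 : algC) < (n.-1)%:R by rewrite ltr0n (nat2 _ hn).
by rewrite ler_pdivlMr // mulr_natr.
Qed.
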